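(* Let $\vec{\mathcal G}=([n],E)$ be a directed graph with $m=|E|$ edges in which every vertex has at least one outgoing edge and which has a single strongly connected component. Let the weights $(r_{ij})$ be independent absolutely continuous random variables with densities $f_{ij}$ satisfying $f_{ij}(y)\le\phi$ for all $(i,j),y$. For $(i,j)\in E$ define $$Y_{ij}(r)=\inf\{x\in\mathbb R:\ \text{some cycle of minimum mean weight in } \vec{\mathcal G} \text{ with weights } (x,r_{-ij}) \text{ does not contain } (i,j)\}$$ (with values in $[-\infty,+\infty]$). Then for every $\alpha>0$, $$\mathbb P\bigl(\exists (i,j)\in E:\ Y_{ij}\le r_{ij}\le Y_{ij}+\alpha\bigr)\le\alpha m\phi .$$
   Context: The mean weight of a directed cycle is the sum of its edge weights divided by its number of edges. $(x,r_{-ij})$ denotes $r$ with coordinate $ij$ replaced by $x$. *)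

(* Defs.v *)
From HB Require Import structures.
From mathcomp Require Import all_boot all_order all_algebra.
From mathcomp Require Import all_classical all_reals all_analysis.
Set Implicit Arguments. Unset Strict Implicit. Unset Printing Implicit Defensive.
Import Order.TTheory GRing.Theory Num.Theory.
Local Open Scope ring_scope.

Section MeanCycles.
Variable n : nat.
Notation V := 'I_n.
Notation edge := (V * V)%type.

Definition is_cycle (E : {set edge}) (c : seq V) : bool :=
  [&& c != [::], uniq c & cycle (fun u v => (u, v) \in E) c].

Definition cycle_edges (c : seq V) : seq edge := zip c (rot 1 c).

Variable R : realType.

Definition mean_weight (r : edge -> R) (c : seq V) : R :=
  (\sum_(e <- cycle_edges c) r e) / (size c)%:R.

Definition is_min_mean_cycle (E : {set edge}) (r : edge -> R) (c : seq V) : Prop :=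
  is_cycle E c /\ forall c', is_cycle E c' -> mean_weight r c <= mean_weight r c'.

Definition upd (r : edge -> R) (e : edge) (x : R) : edge -> R :=
  fun e' => if e' == e then x else r e'.

Definition Yval (E : {set edge}) (e : edge) (r : edge -> R) : \bar R :=
  ereal_inf [set x%:E | x in
    [set x : R | exists c, is_min_mean_cycle E (upd r e x) c /\ e \notin cycle_edges c]].

End MeanCycles.

(* Main.v *)
Require Import Defs.
From HB Require Import structures.
From mathcomp Require Import all_boot all_order all_algebra.
From mathcomp Require Import all_classical all_reals all_analysis.
From mathcomp Require Import ring.
Import Order.TTheory GRing.Theory Num.Theory.
Local Open Scope classical_set_scope.
Local Open Scope ring_scope.

Set Implicit Arguments. Unset Strict Implicit.

Section Comb.
Variables (R : realType) (n : nat) (E : {set 'I_n * 'I_n}) (e : 'I_n * 'I_n).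

Definition Sset (r : 'I_n * 'I_n -> R) : set R :=
  [set x : R | exists c, is_min_mean_cycle E (upd r e x) c /\ e \notin cycle_edges c].

Lemma mean_mono (r : _ -> R) x y c : x <= y ->
  mean_weight (upd r e x) c <= mean_weight (upd r e y) c.
Proof.
move=> xy; rewrite /mean_weight ler_wpM2r ?invr_ge0 ?ler0n //.
by apply: ler_sum => i _; rewrite /upd; case: ifP.
Qed.

Lemma mean_indep (r : _ -> R) x y c : e \notin cycle_edges c ->
  mean_weight (upd r e x) c = mean_weight (upd r e y) c.
Proof.
move=> ec; rewrite /mean_weight; congr (_ / _).
apply: eq_big_seq => i ic; rewrite /upd; case: eqP => // ie.
by move: ec; rewrite -ie ic.
Qed.

Lemma S_up (r : _ -> R) x y : Sset r x -> x <= y -> Sset r y.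
Proof.
move=> [c [[cc cmin] ec]] xy; exists c; split => //; split => // c' cc'.
rewrite (@mean_indep r y x c ec); apply: le_trans (cmin c' cc') _.
exact: mean_mono.
Qed.

Lemma Y_le (r : _ -> R) z : (Yval E e r <= z%:E)%E <-> (forall x, z < x -> Sset r x).
Proof.
split.
  move=> Yz x zx; have : (Yval E e r < x%:E)%E by apply: le_lt_trans Yz _; rewrite lte_fin.
  move/ereal_inf_lt => [y [w Sw <-]]; rewrite lte_fin => wx.
  exact: S_up Sw (ltW wx).
move=> H; apply/lee_addgt0Pr => eps eps0.
rewrite -EFinD; apply: ereal_inf_lbound; exists (z + eps) => //.
by apply: H; rewrite ltrDl.
Qed.

Lemma Y_ge (r : _ -> R) z : (z%:E <= Yval E e r)%E <-> (forall x, x < z -> ~ Sset r x).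
Proof.
split.
  move=> zY x xz Sx.
  have : (Yval E e r <= x%:E)%E by apply: ereal_inf_lbound; exists x.
  move=> Yx; have := le_trans zY Yx; rewrite lee_fin => zx.
  by move: (lt_le_trans xz zx); rewrite ltxx.
move=> H; apply: le_ereal_inf_tmp => _ [w Sw <-]; rewrite lee_fin.
by rewrite leNgt; apply/negP => wz; exact: H wz Sw.
Qed.

Lemma ev_char (r : _ -> R) a alpha :
  ((Yval E e r <= a%:E)%E /\ (a%:E <= Yval E e r + alpha%:E)%E) <->
  ((forall q : rat, a < ratr q -> Sset r (ratr q)) /\
   (forall q : rat, ratr q < a - alpha -> ~ Sset r (ratr q))).
Proof.
have E2 : (a%:E <= Yval E e r + alpha%:E)%E <-> ((a - alpha)%:E <= Yval E e r)%E.
  by rewrite EFinB leeBlDr.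
rewrite E2 Y_le Y_ge; split.
  move=> [H1 H2]; split => q hq; [exact: H1| exact: H2].
move=> [H1 H2]; split.
  move=> x ax; have [q] := rat_in_itvoo ax; rewrite in_itv /= => /andP[aq qx].
  exact: S_up (H1 _ aq) (ltW qx).
move=> x xa Sx; have [q] := rat_in_itvoo xa; rewrite in_itv /= => /andP[xq qa].
exact: (H2 q qa (@S_up r _ _ Sx (ltW xq))).
Qed.

End Comb.

Lemma path_zip_belast (T : eqType) (rl : rel T) x p :
  path rl x p -> forall uv, uv \in zip (belast x p) p -> rl uv.1 uv.2.
Proof.
elim: p x => [//|y p IH] x /= /andP[rxy pp] uv; rewrite in_cons => /orP[/eqP->//|].
exact: IH.
Qed.

Lemma cycle_edges_in n (E : {set 'I_n * 'I_n}) c :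
  is_cycle E c -> forall uv, uv \in cycle_edges c -> uv \in E.
Proof.
case: c => [//|x s] /and3P[_ _ cyc] uv; rewrite /cycle_edges rot1_cons.
rewrite -[x :: s](belast_rcons x s x) => H.
have := @path_zip_belast _ (fun u v => (u, v) \in E) x (rcons s x) cyc uv H.
by case: uv {H}.
Qed.

Section Meas.
Variables (R : realType) (n : nat) (E : {set 'I_n * 'I_n}) (e : 'I_n * 'I_n).
Variables (d0 : measure_display) (T0 : measurableType d0) (s : T0 -> ('I_n * 'I_n -> R)).
Hypothesis hs : forall e', e' \in E -> e' != e -> measurable_fun setT (fun t => s t e').

Lemma meas_sum_upd x (l : seq ('I_n * 'I_n)) : (forall uv, uv \in l -> uv \in E) ->
  measurable_fun setT (fun t => \sum_(uv <- l) upd (s t) e x uv).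
Proof.
elim: l => [|uv l IH] Hl.
  under eq_fun do rewrite big_nil; exact: measurable_cst.
under eq_fun do rewrite big_cons.
apply: measurable_realfun.measurable_funD; last by apply: IH => w wl; apply: Hl; rewrite in_cons wl orbT.
rewrite /upd; case: eqP => [_|/eqP ne]; first exact: measurable_cst.
by apply: hs => //; apply: Hl; rewrite in_cons eqxx.
Qed.

Lemma meas_mean x c : is_cycle E c ->
  measurable_fun setT (fun t => mean_weight (upd (s t) e x) c).
Proof.
move=> cc; rewrite /mean_weight.
apply: measurable_realfun.measurable_funM; first (apply: meas_sum_upd; exact: cycle_edges_in cc).
exact: measurable_cst.
Qed.

Lemma meas_S x : measurable [set t | Sset E e (s t) x].
Proof.
have -> : [set t | Sset E e (s t) x] = \bigcup_(c : seq 'I_n)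
   (if is_cycle E c && (e \notin cycle_edges c) then
      ~` \bigcup_(c' : seq 'I_n) (if is_cycle E c' then
         ~` [set t | mean_weight (upd (s t) e x) c <= mean_weight (upd (s t) e x) c']
         else set0)
    else set0).
  apply/seteqP; split => t /=.
    move=> [c [[cc cmin] ec]]; exists c => //; rewrite cc ec /=.
    move=> [c' _]; case: ifP => // cc' /=; apply; exact: cmin.
  move=> [c _]; case: ifP => // /andP[cc ec] H; exists c; split => //; split => // c' cc'.
  apply: contrapT => Hn; apply: H; exists c' => //; rewrite cc'; exact: Hn.
apply: countable_bigcupT_measurable; first exact: countableP.
move=> c; case: ifP => // /andP[cc _]; apply: measurableC.
apply: countable_bigcupT_measurable; first exact: countableP.
move=> c'; case: ifP => // cc'; apply: measurableC.
rewrite -[X in measurable X]setTI; apply: measurable_fun_le => //; exact: meas_mean.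
Qed.
End Meas.

Lemma meas_forall d (T : measurableType d) (I : eqType) (s : seq I) (Q : I -> set T) :
  (forall x, x \in s -> measurable (Q x)) ->
  measurable [set t | forall x, x \in s -> Q x t].
Proof.
elim: s => [|x s IH] H.
  rewrite (_ : [set t | _] = setT) //; apply/seteqP; split => // t _ x.
rewrite (_ : [set t | _] = Q x `&` [set t | forall y, y \in s -> Q y t]).
  apply: measurableI; first by apply: H; rewrite in_cons eqxx.
  by apply: IH => y ys; apply: H; rewrite in_cons ys orbT.
apply/seteqP; split => t /=.
  by move=> Ht; split => [|y ys]; apply: Ht; rewrite in_cons ?eqxx ?ys ?orbT.
by move=> [Qx Hs] y; rewrite in_cons => /orP[/eqP->//|]; exact: Hs.
Qed.

Section Indep.
Variables (R : realType) (n : nat) (E : {set 'I_n * 'I_n}).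
Variables (d : measure_display) (T : measurableType d) (P : probability T R).
Variable r : T -> ('I_n * 'I_n -> R).
Hypothesis hr : forall e, e \in E -> measurable_fun setT (fun t => r t e).
Hypothesis hind : forall B : 'I_n * 'I_n -> set R, (forall e, e \in E -> measurable (B e)) ->
     P [set t | forall e, e \in E -> B e (r t e)]
     = (\prod_(e in E) fine (P [set t | B e (r t e)]))%:E.
Variable e : 'I_n * 'I_n.
Hypothesis he : e \in E.

Definition rect (B : 'I_n * 'I_n -> set R) : set T :=
  [set t | forall e', e' \in E -> e' != e -> B e' (r t e')].

Definition Gen : set (set T) :=
  [set A | exists2 B : 'I_n * 'I_n -> set R, (forall e', e' \in E -> measurable (B e')) & A = rect B].

Lemma meas_pre e' B : e' \in E -> measurable B -> measurable [set t | B (r t e')].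
Proof.
move=> He mB; rewrite -[X in measurable X]setTI.
exact: (hr He measurableT mB).
Qed.

Lemma rect_meas B : (forall e', e' \in E -> measurable (B e')) -> measurable (rect B).
Proof.
move=> mB.
rewrite (_ : rect B = [set t | forall x, x \in enum E ->
   (if x != e then [set t | B x (r t x)] else setT) t]).
  apply: meas_forall => x; rewrite mem_enum => xE; case: ifP => // _.
  by apply: meas_pre => //; exact: mB.
apply/seteqP; split => t /= H x.
  by rewrite mem_enum => xE; case: ifP => // xe; apply: H.
by move=> xE xe; have := H x; rewrite mem_enum xe => /(_ xE).
Qed.

Lemma Pfin A : measurable A -> P A = (fine (P A))%:E.
Proof. by move=> mA; rewrite fineK // fin_num_measure. Qed.

Lemma Gen_indep J : measurable J -> forall A, Gen A ->
  P (A `&` [set t | J (r t e)]) = (P A * P [set t | J (r t e)])%E.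
Proof.
move=> mJ _ [B mB ->].
pose B1 e' := if e' == e then setT else B e'.
pose B2 e' := if e' == e then J else B e'.
have -> : rect B = [set t | forall e', e' \in E -> B1 e' (r t e')].
  apply/seteqP; split => t /= H x xE.
    by rewrite /B1; case: eqP => // /eqP xe; exact: H.
  by move=> xe; have := H x xE; rewrite /B1 (negPf xe).
have -> : [set t | forall e', e' \in E -> B1 e' (r t e')] `&` [set t | J (r t e)]
    = [set t | forall e', e' \in E -> B2 e' (r t e')].
  apply/seteqP; split => t /=.
    by move=> [H Jt] x xE; rewrite /B2; case: eqP => [->//|/eqP xe]; have := H x xE; rewrite /B1 (negPf xe).
  move=> H; split; last by have := H e he; rewrite /B2 eqxx.
  by move=> x xE; have := H x xE; rewrite /B1 /B2; case: eqP.
have mB1 : forall e', e' \in E -> measurable (B1 e') by move=> x xE; rewrite /B1; case: eqP => // _; exact: mB.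
have mB2 : forall e', e' \in E -> measurable (B2 e') by move=> x xE; rewrite /B2; case: eqP => // _; exact: mB.
rewrite (hind mB1) (hind mB2) (Pfin (meas_pre he mJ)) -EFinM; congr EFin.
rewrite (bigD1 e he) [in RHS](bigD1 e he) /= /B1 /B2 !eqxx.
rewrite (_ : [set t | setT (r t e)] = setT) // probability_setT /= mul1r mulrC; congr (_ * _).
by apply: eq_bigr => x /andP[_ xe]; rewrite (negPf xe).
Qed.

Lemma Gen_setI : setI_closed Gen.
Proof.
move=> _ _ [B1 mB1 ->] [B2 mB2 ->]; exists (fun x => B1 x `&` B2 x).
  by move=> x xE; apply: measurableI; [exact: mB1|exact: mB2].
apply/seteqP; split => t /=.
  by move=> [H1 H2] x xE xe; split; [exact: H1|exact: H2].
by move=> H; split => x xE xe; have [] := H x xE xe.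
Qed.

Lemma sigma_indep J : measurable J -> forall A, <<s Gen >> A ->
  measurable A /\ P (A `&` [set t | J (r t e)]) = (P A * P [set t | J (r t e)])%E.
Proof.
move=> mJ; set X := [set t | J (r t e)].
have mX : measurable X by exact: meas_pre.
pose H := [set A : set T | measurable A /\ P (A `&` X) = (P A * P X)%E].
suff : <<s Gen >> `<=` H by move=> sub A /sub.
apply: lambda_system_subset.
- exact: Gen_setI.
- apply/dynkin_lambda_system; split.
  + split => //; rewrite setTI probability_setT mul1e //.
  + move=> A [mA HA]; split; first exact: measurableC.
    rewrite probability_setC // (_ : ~` A `&` X = X `\` A); last by rewrite setDE setIC.
    have PXf : (P X < +oo)%E by rewrite (Pfin mX) ltry.
    have HD : P (X `\` A) = (P X - P (X `&` A))%E by apply: measureD.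
    rewrite HD setIC HA.
    rewrite (Pfin mA) (Pfin mX) -EFinM -EFinB -EFinB -EFinM; congr EFin.
    by rewrite mulrBl mul1r.
  + move=> F tF HF; split; first by apply: bigcupT_measurable => k; exact: (HF k).1.
    rewrite setI_bigcupl measure_bigcup //; last exact: trivIset_setIr.
      rewrite measure_bigcup //; last by move=> k _; exact: (HF k).1.
      rewrite (Pfin mX).
      transitivity (\big[+%E/0]_(0 <= i <oo | i \in [set: nat]) ((fine (P X))%:E * P (F i)))%E.
        apply: eq_eseriesr => k _; apply: eq_trans ((HF k).2) _.
        by rewrite [in LHS](Pfin mX) muleC.
      rewrite nneseriesZl; first by rewrite muleC.
      by move=> k _; exact: measure_ge0.
    by move=> k _; apply: measurableI => //; exact: (HF k).1.
- by move=> A GA; split; [case: GA => B mB ->; exact: rect_meas| exact: Gen_indep].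
- by [].
Qed.

End Indep.

Section Edge.
Variables (R : realType) (n : nat) (E : {set 'I_n * 'I_n}).
Variables (d : measure_display) (T : measurableType d) (P : probability T R).
Variable r : T -> ('I_n * 'I_n -> R).
Variables (f : 'I_n * 'I_n -> R -> R) (phi alpha : R).
Hypothesis hr : forall e, e \in E -> measurable_fun setT (fun t => r t e).
Hypothesis hind : forall B : 'I_n * 'I_n -> set R, (forall e, e \in E -> measurable (B e)) ->
     P [set t | forall e, e \in E -> B e (r t e)]
     = (\prod_(e in E) fine (P [set t | B e (r t e)]))%:E.
Hypothesis hmf : forall e, e \in E -> measurable_fun setT (f e).
Hypothesis hf0 : forall e, e \in E -> forall y, 0 <= f e y.
Hypothesis hdens : forall e, e \in E -> forall B : set R, measurable B ->
     P [set t | B (r t e)] = (\int[lebesgue_measure]_(y in B) (f e y)%:E)%E.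
Hypothesis hphi : forall e, e \in E -> forall y, f e y <= phi.
Variable e : 'I_n * 'I_n.
Hypothesis he : e \in E.

Lemma phi_ge0 : 0 <= phi.
Proof. exact: le_trans (hf0 he 0) (hphi he 0). Qed.

Lemma PX_bound a b : a <= b ->
  (P [set t | [set` `[a, b]] (r t e)] <= (phi * (b - a))%:E)%E.
Proof.
move=> ab.
have mI : measurable [set` `[a, b]] by exact: measurable_itv.
rewrite (hdens he mI).
have H := @ge0_le_integral _ _ _ lebesgue_measure _ mI (fun y => (f e y)%:E) (fun _ => phi%:E).
apply: le_trans (H _ _ _ _) _.
- by move=> x _; rewrite lee_fin hf0.
- by apply/measurable_realfun.measurable_EFinP; apply: measurable_funS (hmf he).
- exact: measurable_cst.
- by move=> x _; rewrite lee_fin hphi.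
rewrite [X in (X <= _)%E](_ : _ = (phi%:E * lebesgue_measure [set` `[a, b]])%E); last exact: integral_cst.
rewrite lebesgue_measure_itv /=.
case: ifP => _; last by rewrite mule0 lee_fin mulr_ge0 ?phi_ge0 ?subr_ge0.
by rewrite -EFinB -EFinM.
Qed.


Hypothesis halpha : 0 < alpha.

Definition M x : set T := [set t | Sset E e (r t) x].

Lemma gmeas e' : e' \in E -> e' != e ->
  measurable_fun (setT : set (g_sigma_algebraType (Gen E r e))) (fun t => r t e').
Proof.
move=> e'E e'e _ B mB; apply: sub_sigma_algebra.
exists (fun x => if x == e' then B else setT).
  by move=> x xE; case: ifP.
apply/seteqP; split => t /=.
  by move=> [_ Bt] x xE xe; case: eqP => // ->.
by move=> H; split => //; have := H e' e'E e'e; rewrite eqxx.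
Qed.

Lemma M_sigma x : @measurable _ (g_sigma_algebraType (Gen E r e)) (M x).
Proof. exact: (@meas_S _ _ _ _ _ (g_sigma_algebraType (Gen E r e)) r gmeas x). Qed.

Lemma sig_meas A : <<s Gen E r e >> A -> measurable A.
Proof. by move=> HA; have [] := sigma_indep hr hind he (@measurableT _ R) HA. Qed.

Lemma M_meas x : measurable (M x).
Proof. exact: sig_meas (M_sigma x). Qed.

Definition EV : set T :=
  [set t | (Yval E e (r t) <= (r t e)%:E <= Yval E e (r t) + alpha%:E)%E].

Lemma forall_rat_meas (Q : rat -> set T) : (forall q, measurable (Q q)) ->
  measurable [set t | forall q, Q q t].
Proof.
move=> mQ; rewrite (_ : [set t | _] = ~` \bigcup_q ~` Q q).
  by apply: measurableC; apply: bigcupT_measurable_rat => q; exact: measurableC.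
apply/seteqP; split => t /=.
  by move=> H [q _]; apply; exact: H.
by move=> H q; apply: contrapT => nq; apply: H; exists q.
Qed.

Lemma meas_ge a : measurable [set t | a <= r t e].
Proof.
rewrite (_ : [set t | _] = [set t | [set` `[a, +oo[] (r t e)]).
  exact: (meas_pre hr he (measurable_itv _)).
by apply/seteqP; split => t /=; rewrite in_itv /= andbT.
Qed.

Lemma meas_le a : measurable [set t | r t e <= a].
Proof.
rewrite (_ : [set t | _] = [set t | [set` `]-oo, a]] (r t e)]).
  exact: (meas_pre hr he (measurable_itv _)).
by apply/seteqP; split => t /=; rewrite in_itv /=.
Qed.

Lemma EV_meas : measurable EV.
Proof.
rewrite (_ : EV = [set t | forall q : rat, ([set t | ratr q <= r t e] `|` M (ratr q)) t]
   `&` [set t | forall q : rat, ([set t | r t e - alpha <= ratr q] `|` ~` M (ratr q)) t]).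
  apply: measurableI; apply: forall_rat_meas => q; apply: measurableU.
  - exact: meas_ge.
  - exact: M_meas.
  - rewrite (_ : [set t | _] = [set t | r t e <= ratr q + alpha]); first exact: meas_le.
    by apply/seteqP; split => t /=; rewrite lerBlDr.
  - exact/measurableC/M_meas.
apply/seteqP; split => t /=.
  move=> /andP[h1 h2]; have [H1 H2] := (ev_char E e (r t) (r t e) alpha).1 (conj h1 h2).
  split => q.
    by case: (leP (ratr q) (r t e)) => [|/H1]; [left|right].
  by case: (leP (r t e - alpha) (ratr q)) => [|/H2]; [left|right].
move=> [H1 H2]; apply/andP; apply/(ev_char E e (r t) (r t e) alpha); split => q hq.
  by case: (H1 q) => //=; rewrite leNgt hq.
by case: (H2 q) => //=; rewrite leNgt hq.
Qed.

Section Delta.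
Variable delta : R.
Hypothesis hdelta : 0 < delta.

Definition AA (z : int) : set T := ~` M (z%:~R * delta) `&` M ((z + 1)%:~R * delta).
Definition XX (z : int) : set T :=
  [set t | [set` `[z%:~R * delta, (z + 1)%:~R * delta + alpha]] (r t e)].
Definition GG k := if @pickle_inv int k is Some z then AA z else set0.
Definition FF k := if @pickle_inv int k is Some z then AA z `&` XX z else set0.

Lemma AA_sigma z : @measurable _ (g_sigma_algebraType (Gen E r e)) (AA z).
Proof. by apply: measurableI; [apply: measurableC|]; exact: M_sigma. Qed.

Lemma XX_meas_itv z : measurable [set` `[z%:~R * delta, (z + 1)%:~R * delta + alpha]].
Proof. exact: measurable_itv. Qed.

Lemma AA_disj z z' : z < z' -> AA z `&` AA z' = set0.
Proof.
move=> zz'; apply/seteqP; split => // t [[_ Mz] [nMz' _]]; apply: nMz'.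
apply: S_up Mz _; rewrite ler_wpM2r ?(ltW hdelta) // ler_int lezD1 //.
Qed.

Lemma GG_triv : trivIset setT GG.
Proof.
apply/trivIsetP => i j _ _ ij; rewrite /GG.
case pi: (@pickle_inv int i) => [z|]; last by rewrite set0I.
case pj: (@pickle_inv int j) => [z'|]; last by rewrite setI0.
have zz' : z != z'.
  apply: contra ij => /eqP zz.
  have := @pickle_invK int i; rewrite pi /= => <-.
  by have := @pickle_invK int j; rewrite pj /= -zz => <-.
case: (ltgtP z z') zz' => [zz' _|zz' _|->]; last by [].
  by rewrite AA_disj.
by rewrite setIC AA_disj.
Qed.

Lemma GG_meas k : measurable (GG k).
Proof. by rewrite /GG; case: pickle_inv => // z; exact: sig_meas (AA_sigma z). Qed.

Lemma FF_meas k : measurable (FF k).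
Proof.
rewrite /FF; case: pickle_inv => // z; apply: measurableI.
  exact: sig_meas (AA_sigma z).
exact: (meas_pre hr he (XX_meas_itv z)).
Qed.

Lemma cover : EV `<=` \bigcup_k FF k.
Proof.
move=> t /andP[h1 h2].
case Y: (Yval E e (r t)) h1 h2 => [y| |] h1 h2;
  [|by move: h1; rewrite leNgt ltry|by move: h2; rewrite addNye leNgt ltNyr].
have Sup : forall x, y < x -> M x t by apply/(Y_le E e (r t) y); rewrite Y.
have Slow : forall x, x < y -> ~ M x t by apply/(Y_ge E e (r t) y); rewrite Y.
move: h1 h2; rewrite -EFinD !lee_fin => h1 h2.
set z := Num.floor (y / delta).
have fz : z%:~R * delta <= y by rewrite -ler_pdivlMr // floor_le.
have fz1 : y < (z + 1)%:~R * delta.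
  by rewrite -ltr_pdivrMr // -floor_lt_int ltzD1.
case: (pselect (M (z%:~R * delta) t)) => Mz.
  have yz : y = z%:~R * delta.
    apply/eqP; rewrite eq_le fz andbT leNgt; apply/negP => zy; exact: Slow _ zy Mz.
  exists (pickle (z - 1)); first exact: I.
  rewrite /FF pickleK_inv.
  split; last first.
    rewrite /XX /= in_itv /= subrK; apply/andP; split.
      apply: le_trans h1; apply: le_trans fz; rewrite ler_wpM2r ?(ltW hdelta) //.
      by rewrite ler_int gerBl.
    by rewrite -yz.
  split; last by rewrite /= subrK.
  apply: Slow; apply: lt_le_trans fz; rewrite ltr_pM2r // ltr_int.
  by rewrite gtrBl.
exists (pickle z); first exact: I.
rewrite /FF pickleK_inv; split; first by split => //; exact: Sup.
rewrite /XX /= in_itv /=; apply/andP; split; first exact: le_trans h1.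
by apply: le_trans h2 _; rewrite lerD2r ltW.
Qed.

Lemma EV_delta : (P EV <= (phi * (delta + alpha))%:E)%E.
Proof.
have mEV := EV_meas.
apply: le_trans (@measure_sigma_subadditive _ _ _ P EV FF FF_meas mEV cover) _.
set c := phi * (delta + alpha).
have c0 : 0 <= c by rewrite mulr_ge0 ?phi_ge0 // addr_ge0 // ltW.
apply: (@le_trans _ _ (\sum_(0 <= k <oo) (c%:E * P (GG k)))%E).
  apply: lee_nneseries => [k _ _|k _]; first exact: measure_ge0.
  rewrite /FF /GG; case: pickle_inv => [z|]; last by rewrite !measure0 mule0.
  apply: (@le_trans _ _ (P (AA z) * P (XX z))%E).
    rewrite le_eqVlt; apply/orP; left; apply/eqP.
    exact: (sigma_indep hr hind he (XX_meas_itv z) (AA_sigma z)).2.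
  rewrite muleC; apply: lee_wpmul2r; first exact: measure_ge0.
  have -> : c = phi * ((z + 1)%:~R * delta + alpha - z%:~R * delta).
    by rewrite /c intrD; ring.
  apply: PX_bound; apply: (@le_trans _ _ ((z + 1)%:~R * delta)); last by rewrite lerDl ltW.
  by rewrite ler_wpM2r ?(ltW hdelta) // ler_int lerDl.
rewrite nneseriesZl; last by move=> k _; exact: measure_ge0.
have mU : measurable (\bigcup_(k in setT) GG k) by apply: bigcup_measurable => k _; exact: GG_meas.
have <- : P (\bigcup_(k in setT) GG k) = (\sum_(0 <= k <oo) P (GG k))%E.
  rewrite measure_bigcup //; last exact: GG_triv.
    by apply: eq_eseriesl => k; rewrite in_setT.
  by move=> k _; exact: GG_meas.
apply: le_trans (lee_wpmul2l _ (probability_le1 P mU)) _; first by rewrite lee_fin.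
by rewrite mule1.
Qed.

End Delta.

Lemma EV_bound : (P EV <= (alpha * phi)%:E)%E.
Proof.
apply/lee_addgt0Pr => eps eps0.
have p1 : 0 < phi + 1 by rewrite ltr_wpDl ?phi_ge0.
pose delta := eps / (phi + 1).
have d0 : 0 < delta by rewrite divr_gt0.
apply: le_trans (EV_delta d0) _; rewrite -EFinD lee_fin mulrDr addrC mulrC lerD2l.
by rewrite /delta mulrA ler_pdivrMr // mulrDr mulr1 mulrC lerDl ltW.
Qed.

End Edge.

Unset Implicit Arguments. Set Strict Implicit.

Theorem mainTheorem5 (R : realType) (n : nat) (E : {set 'I_n * 'I_n})
  (d : measure_display) (T : measurableType d) (P : probability T R)
  (r : T -> ('I_n * 'I_n -> R)) (f : 'I_n * 'I_n -> R -> R) (phi alpha : R) :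
  (forall i : 'I_n, exists j : 'I_n, (i, j) \in E) ->
  (forall i j : 'I_n, connect (fun u v => (u, v) \in E) i j) ->
  (forall e, e \in E -> measurable_fun setT (fun t => r t e)) ->
  (forall B : 'I_n * 'I_n -> set R, (forall e, e \in E -> measurable (B e)) ->
     P [set t | forall e, e \in E -> B e (r t e)]
     = (\prod_(e in E) fine (P [set t | B e (r t e)]))%:E) ->
  (forall e, e \in E -> measurable_fun setT (f e)) ->
  (forall e, e \in E -> forall y, 0 <= f e y) ->
  (forall e, e \in E -> forall B : set R, measurable B ->
     P [set t | B (r t e)] = (\int[lebesgue_measure]_(y in B) (f e y)%:E)%E) ->
  (forall e, e \in E -> forall y, f e y <= phi) ->
  0 < alpha ->
  (P [set t | exists e, e \in E /\
       (Yval E e (r t) <= (r t e)%:E <= Yval E e (r t) + alpha%:E)%E]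
   <= (alpha * #|E|%:R * phi)%:E)%E.
Proof.
move=> _ _ hr hind hmf hf0 hdens hphi halpha.
have key : forall s : seq ('I_n * 'I_n), (forall e, e \in s -> e \in E) ->
  measurable [set t | exists e, e \in s /\ EV E r alpha e t] /\
  (P [set t | exists e, e \in s /\ EV E r alpha e t] <= ((size s)%:R * (alpha * phi))%:E)%E.
  elim => [|x s IH] Hs.
    rewrite (_ : [set t | _] = set0); first by rewrite measure0 mul0r.
    by apply/seteqP; split => t //= [e [] //].
  have xE : x \in E by apply: Hs; rewrite in_cons eqxx.
  have Hs' : forall e, e \in s -> e \in E by move=> e es; apply: Hs; rewrite in_cons es orbT.
  have [mU bU] := IH Hs'.
  have mX := EV_meas (P:=P) alpha hr hind xE.
  rewrite (_ : [set t | _] = EV E r alpha x `|` [set t | exists e, e \in s /\ EV E r alpha e t]).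
    split; first exact: measurableU.
    apply: le_trans (measureU2 P mX mU) _.
    rewrite /= -nat1r mulrDl mul1r EFinD.
    apply: leeD; last exact: bU.
    exact: (EV_bound hr hind hmf hf0 hdens hphi xE halpha).
  apply/seteqP; split => t /=.
    move=> [e []]; rewrite in_cons => /orP[/eqP->|es] He; first by left.
    by right; exists e.
  by move=> [Hx|[e [es He]]]; [exists x; rewrite in_cons eqxx|exists e; rewrite in_cons es orbT].
have [_ H] := key (enum E) (fun e => ltac:(by rewrite mem_enum)).
rewrite (_ : [set t | _] = [set t | exists e, e \in enum E /\ EV E r alpha e t]).
  by apply: le_trans H _; rewrite -cardE lee_fin mulrA (mulrC (#|E|%:R)).
by apply/seteqP; split => t [e [eE He]]; exists e; rewrite ?mem_enum in eE *.
Qed.
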